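(* Let $G=(V,E)$ be a finite connected graph with girth at least $9$ and minimum degree $\delta\ge 3$, and let $G^2-E$ denote the graph on vertex set $V$ in which $u,v$ are adjacent if and only if $\mathrm{dist}_G(u,v)=2$. Then $\mathrm{cc}(G^2-E)\ge \min\{2\delta,\gamma(G^2-E)\}$.
   Context: All graphs are finite and reflexive (a loop at every vertex; moving along a loop means passing); loops are ignored for girth, degrees and distances. $\gamma$ denotes domination number. $G^2$ is the square of $G$ (adding edges between vertices at distance $2$), so $G^2-E$ has exactly the edges joining vertices at distance $2$ in $G$. Cops and Attacking Robbers: the cop player places $k$ cops on vertices, then the robber chooses a vertex. In each round the cops move (each cop moves to an adjacent vertex or passes), then the robber moves (to an adjacent vertex or passes). The cops win if after finitely many moves a cop moves onto the robber's vertex. Additionally, if the robber moves onto a vertex occupied by a cop, exactly one cop on that vertex is removed from the game; the robber's initial placement on a cop's vertex does not count as an attack. Both players play optimally. The attacking cop number $\mathrm{cc}(G)$ is the least $k$ such that $k$ cops can guarantee a win. *)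

(* Defs.v *)
From mathcomp Require Import all_boot.
Set Implicit Arguments. Unset Strict Implicit. Unset Printing Implicit Defensive.

Section Defs.
Variable T : finType.

(* A finite simple graph is a symmetric irreflexive relation e on T;
   the loops of the reflexive graph are implicit (see [adj]). *)
Definition simple_graph (e : rel T) := symmetric e /\ irreflexive e.

Definition connected (e : rel T) := forall x y : T, connect e x y.

Definition deg (e : rel T) (x : T) : nat := #|[set y | e x y]|.

Definition girth_ge (e : rel T) (g : nat) :=
  forall c : seq T, ucycle e c -> 3 <= size c -> g <= size c.

Definition min_degree (e : rel T) (delta : nat) :=
  (forall x, delta <= deg e x) /\ (exists x, deg e x = delta).

Definition dist2 (e : rel T) : rel T :=
  fun x y => [&& x != y, ~~ e x y & [exists z, e x z && e z y]].

Definition sq_minus (e : rel T) : rel T := dist2 e.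

Definition dominating (e : rel T) (D : {set T}) :=
  [forall x, (x \in D) || [exists y in D, e y x]].

Definition domination_number (e : rel T) : nat :=
  \big[minn/#|T|]_(D : {set T} | dominating e D) #|D|.

Definition adj (e : rel T) : rel T := fun a b => (a == b) || e a b.

(* Cops and attacking robbers.  [cwin e cs r]: cops are at positions cs
   (a multiset given as a list), the robber is at r, and it is the cops'
   turn; the cops can force a capture in finitely many moves.
   After the cops move to cs', capture occurs if r \in cs'; otherwise the
   robber moves to r' (adjacent or pass), and if r' carries a cop, exactly
   one cop there is removed ([rem r' cs']). *)
Inductive cwin (e : rel T) : seq T -> T -> Prop :=
| cwin_step (cs : seq T) (r : T) (cs' : seq T) :
    all2 (adj e) cs cs' ->
    (r \in cs' \/ forall r', adj e r r' -> cwin e (rem r' cs') r') ->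
    cwin e cs r.

Definition cops_win (e : rel T) (k : nat) :=
  exists cs : seq T, size cs = k /\ forall r : T, cwin e cs r.

(* cc(e) >= m  iff every k for which k cops win satisfies m <= k
   (cc is the least such k). *)
Definition cc_ge (e : rel T) (m : nat) := forall k, cops_win e k -> m <= k.

End Defs.

(* Main.v *)
Require Import Defs.
From mathcomp Require Import all_boot zify.
Set Implicit Arguments. Unset Strict Implicit. Unset Printing Implicit Defensive.

Section Main.
Variable T : finType.
Variable e : rel T.
Hypothesis esym : symmetric e.
Hypothesis eirr : irreflexive e.
Hypothesis hg : girth_ge e 9.

Lemma walk_cycle (f : nat -> T) m : 0 < m -> (forall k, k < m -> e (f k) (f k.+1)) ->
  f 0 = f m -> (forall k, k.+2 <= m -> f k != f k.+2) ->
  exists c, ucycle e c /\ 3 <= size c <= m.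
Proof.
move=> m0 hE h0 hB.
have exP : exists j, [exists i : 'I_j, f i == f j].
  by exists m; apply/existsP; exists (Ordinal m0); rewrite /= h0.
case: (ex_minnP exP) => j /existsP [[i lt_ij] /= /eqP fij] minj.
have jm : j <= m by apply: minj; apply/existsP; exists (Ordinal m0); rewrite /= h0.
have inj : forall a b, a < b -> b < j -> f a != f b.
  move=> a b ab bj; apply/negP => /eqP fab.
  have : j <= b by apply: minj; apply/existsP; exists (Ordinal ab); rewrite /= fab.
  by rewrite leqNgt bj.
exists [seq f k | k <- iota i (j - i)].
rewrite size_map size_iota; split; last first.
  apply/andP; split; last by lia.
  have h1 : j - i != 1.
    apply/eqP => h; have ji : j = i.+1 by lia.
    by move: (hE i ltac:(lia)); rewrite -ji -fij eirr.
  have h2 : j - i != 2.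
    apply/eqP => h; have ji : j = i.+2 by lia.
    by move: (hB i ltac:(lia)); rewrite -ji -fij eqxx.
  lia.
apply/andP; split; last first.
  rewrite map_inj_in_uniq ?iota_uniq // => a b; rewrite !mem_iota => /andP[ia aj] /andP[ib bj] fab.
  case: (ltngtP a b) => // ab.
    by move: (inj a b ab ltac:(lia)); rewrite fab eqxx.
  by move: (inj b a ab ltac:(lia)); rewrite fab eqxx.
rewrite (cycle_path (f i)).
have hl : last (f i) [seq f k | k <- iota i (j - i)] = f j.-1.
  rewrite -nth_last size_map size_iota (nth_map 0) ?size_iota; last by lia.
  rewrite nth_iota; last by lia.
  congr f; lia.
rewrite hl; apply/(pathP (f i)) => k; rewrite size_map size_iota => kl.
rewrite (nth_map 0) ?size_iota // nth_iota //.
case: k kl => [|k] kl /=.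
  rewrite addn0 fij.
  have -> : j = j.-1.+1 by lia.
  apply: hE; lia.
rewrite (nth_map 0) ?size_iota; last by lia.
rewrite nth_iota; last by lia.
have -> : i + k.+1 = (i + k).+1 by lia.
apply: hE; lia.
Qed.

Lemma nowalk (x : T) (s : seq T) : path e x s -> last x s = x -> 0 < size s <= 8 ->
  (forall k, k.+2 <= size s -> nth x (x::s) k != nth x (x::s) k.+2) -> False.
Proof.
move=> hp hl /andP[s0 s8] hB.
have [||c [uc /andP[c3 cs]]] := @walk_cycle (nth x (x::s)) (size s) s0 _ _ hB.
- by move=> k ks; move/(pathP x): hp => /(_ k ks).
- by have := nth_last x (x::s); rewrite /= hl.
by have := leq_trans (hg uc c3) (leq_trans cs s8).
Qed.

Ltac walk_tac := repeat (apply/andP; split); try done; try (by rewrite esym).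

Notation H := (dist2 e).

Lemma tri r u w : e r u -> e u w -> w != r -> ~~ e r w.
Proof.
move=> ru uw wr; apply/negP => rw.
apply: (@nowalk r [:: u; w; r]) => //.
  by rewrite /= ru uw esym rw.
case=> [|[|k]] //= _; first by rewrite eq_sym.
by apply/negP => /eqP ur; move: ru; rewrite ur eirr.
Qed.

Definition assigned r u c := [exists w, [&& e u w, w != r & (c == w) || H c w]].

Lemma f2 r u c w1 w2 : c != r -> ~~ e u c -> e u w1 -> e u w2 -> w1 != w2 ->
  H c w1 -> H c w2 -> False.
Proof.
move=> cr uc uw1 uw2 w12 /and3P[cw1 ncw1 /existsP[z1 /andP[cz1 z1w1]]]
  /and3P[cw2 ncw2 /existsP[z2 /andP[cz2 z2w2]]].
apply: (@nowalk c [:: z1; w1; u; w2; z2; c]) => //.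
  by rewrite /= cz1 z1w1 (esym w1) uw1 uw2 (esym w2) z2w2 (esym z2) cz2.
case=> [|[|[|[|[|k]]]]] //= _.
- by apply/eqP => E; move: uc; rewrite -E esym cz1.
- by apply/eqP => E; move: uc; rewrite E esym cz2.
- by rewrite eq_sym.
Qed.

Ltac ptac := rewrite /=; repeat (apply/andP; split); first [done | by rewrite esym].
Ltac ntac := first [done | by rewrite eq_sym | idtac].

Lemma f1a r u1 u2 w1 w2 : e r u1 -> e r u2 -> u1 != u2 -> e u1 w1 -> w1 != r ->
  e u2 w2 -> w2 != r -> (w1 == w2) || H w1 w2 -> False.
Proof.
move=> ru1 ru2 u12 uw1 w1r uw2 w2r /orP[/eqP E|/and3P[w12 nw12 /existsP[z2 /andP[wz2 z2w2]]]].
  subst w2; apply: (@nowalk w1 [:: u1; r; u2; w1]) => //; first by ptac.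
  by case=> [|[|[|k]]] //= _; ntac.
case: (eqVneq z2 u2) => [E|zu].
  subst z2; apply: (@nowalk w1 [:: u1; r; u2; w1]) => //; first by ptac.
  by case=> [|[|[|k]]] //= _; ntac.
apply: (@nowalk w1 [:: u1; r; u2; w2; z2; w1]) => //; first by ptac.
by case=> [|[|[|[|[|k]]]]] //= _; ntac.
Qed.

Lemma f1 r u1 u2 c : e r u1 -> e r u2 -> c != r -> assigned r u1 c -> assigned r u2 c -> u1 = u2.
Proof.
move=> ru1 ru2 cr /existsP[w1 /and3P[uw1 w1r h1]] /existsP[w2 /and3P[uw2 w2r h2]].
apply/eqP; apply: contraT => u12; exfalso.
case/orP: h1 => [/eqP E1|Hc1].
  by subst c; apply: (@f1a r u1 u2 w1 w2).
case/orP: h2 => [/eqP E2|Hc2].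
  subst c; apply: (@f1a r u2 u1 w2 w1) => //; first by rewrite eq_sym.
  by rewrite Hc1 orbT.
move: Hc1 Hc2 => /and3P[cw1 ncw1 /existsP[z1 /andP[cz1 z1w1]]]
  /and3P[cw2 ncw2 /existsP[z2 /andP[cz2 z2w2]]].
case: (eqVneq z1 u1) => [E1|zu1]; case: (eqVneq z2 u2) => [E2|zu2].
- subst z1 z2; apply: (@nowalk c [:: u1; r; u2; c]) => //; first by ptac.
  by case=> [|[|[|k]]] //= _; ntac.
- subst z1; apply: (@nowalk c [:: u1; r; u2; w2; z2; c]) => //; first by ptac.
  by case=> [|[|[|[|[|k]]]]] //= _; ntac.
- subst z2; apply: (@nowalk c [:: z1; w1; u1; r; u2; c]) => //; first by ptac.
  by case=> [|[|[|[|[|k]]]]] //= _; ntac.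
- apply: (@nowalk c [:: z1; w1; u1; r; u2; w2; z2; c]) => //; first by ptac.
  by case=> [|[|[|[|[|[|[|k]]]]]]] //= _; ntac.
Qed.

Definition safe cs r := (r \notin cs) && all (fun c => ~~ H c r) cs.

Lemma sum_count_le (A : {set T}) (P : T -> pred T) s :
  (forall x, x \in s -> forall u v, u \in A -> v \in A -> P u x -> P v x -> u = v) ->
  \sum_(u in A) count (P u) s <= size s.
Proof.
elim: s => [|x s IH] Hd; first by rewrite big1.
rewrite /= big_split /=.
have h : \sum_(u in A) (P u x : nat) <= 1.
  case: (pickP [pred u in A | P u x]) => [u0 /andP[u0A Pu0]|none].
    rewrite (bigD1 u0) //= Pu0 big1 // => v /andP[vA vu0].
    case Pv: (P v x) => //.
    by move: vu0; rewrite (Hd x (mem_head _ _) u0 v) ?eqxx.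
  by rewrite big1 // => v vA; move: (none v); rewrite /= vA /= => ->.
rewrite -add1n; apply: leq_add h _; apply: IH => y ys; apply: Hd; by rewrite inE ys orbT.
Qed.

Lemma key r cs delta : (forall x, delta <= deg e x) -> 3 <= delta -> r \notin cs ->
  size cs < 2 * delta -> exists r', H r r' /\ safe (rem r' cs) r'.
Proof.
move=> hdeg d3 rcs szcs.
have Hsum := @sum_count_le [set y | e r y] (assigned r) cs.
have [u ru cnt] : exists2 u, e r u & count (assigned r u) cs < 2.
  case: (pickP [pred u | e r u && (count (assigned r u) cs < 2)]) => [u /andP[? ?]|none].
    by exists u.
  exfalso.
  have h1 : \sum_(u in [set y | e r y]) 2 <= \sum_(u in [set y | e r y]) count (assigned r u) cs.
    apply: leq_sum => v; rewrite inE => rv; move: (none v); rewrite /= rv /= => /negbT.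
    by rewrite -leqNgt.
  have h2 := Hsum ltac:(move=> x xc v w; rewrite !inE => rv rw;
    apply: f1 => //; by apply: contraNneq rcs => <-).
  rewrite sum_nat_const in h1.
  have dr := hdeg r; rewrite /deg in dr.
  have h4 : 2 * delta <= #|[set y | e r y]| * 2 by rewrite mulnC leq_mul2r dr orbT.
  by have := leq_trans szcs (leq_trans h4 (leq_trans h1 h2)); rewrite ltnn.
have asg : forall x w, e u w -> w != r -> (x == w) || H x w -> assigned r u x.
  by move=> x w uw wr hx; apply/existsP; exists w; rewrite uw wr.
have Hrw : forall w, e u w -> w != r -> H r w.
  move=> w uw wr; apply/and3P; split; first by rewrite eq_sym.
    exact: (tri ru).
  by apply/existsP; exists u; rewrite ru.
have [w1 [w2 []]] : exists w1 w2, [/\ w1 \in [set y | e u y] :\ r, w2 \in [set y | e u y] :\ r & w1 != w2].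
  apply/card_gt1P.
  have := cardsD1 r [set y | e u y]; have := hdeg u; rewrite /deg.
  case: (r \in [set y | e u y]) => /=; lia.
rewrite !inE => /andP[w1r uw1] /andP[w2r uw2] w12.
have [c0|c1] : count (assigned r u) cs = 0 \/ count (assigned r u) cs = 1 by lia.
  have none : forall x, x \in cs -> ~~ assigned r u x.
    by apply/hasPn; rewrite has_count c0.
  exists w1; split; first exact: Hrw.
  have w1n : w1 \notin cs.
    by apply/negP => /none; rewrite (asg w1 w1) // eqxx.
  rewrite rem_id // /safe w1n /=; apply/allP => x xc; apply/negP => hx.
  by move: (none x xc); rewrite (asg x w1) // hx orbT.
have /hasP [c cin ac] : has (assigned r u) cs by rewrite has_count c1.
have pr := perm_to_rem cin.
have cnt0 : count (assigned r u) (rem c cs) = 0.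
  by move: c1; rewrite (permP pr) /= ac; lia.
have none : forall x, x \in rem c cs -> ~~ assigned r u x.
  by apply/hasPn; rewrite has_count cnt0.
have memcs : forall x, x \in cs -> x = c \/ x \in rem c cs.
  by move=> x; rewrite (perm_mem pr) inE => /orP[/eqP|]; auto.
have cr : c != r by apply: contraNneq rcs => <-.
case Bc: (e u c && (c != r)).
  move/andP: Bc => [uc _]; exists c; split; first exact: Hrw.
  apply/andP; split.
    by apply/negP => /none; rewrite (asg c c) // eqxx.
  apply/allP => x xin; apply/negP => hx.
  by move: (none x xin); rewrite (asg x c) // hx orbT.
have uc : ~~ e u c by move: Bc; rewrite cr andbT => ->.
have [w [uw wr nh]] : exists w, [/\ e u w, w != r & ~~ H c w].
  case h1: (H c w1); last by exists w1; split; rewrite ?h1.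
  case h2: (H c w2); last by exists w2; split; rewrite ?h2.
  by exfalso; apply: (@f2 r u c w1 w2).
exists w; split; first exact: Hrw.
have wn : w \notin cs.
  apply/negP => /memcs [E|win]; first by subst w; rewrite uw in uc.
  by move: (none w win); rewrite (asg w w) // eqxx.
rewrite rem_id // /safe wn /=; apply/allP => x /memcs [->|xin]; first exact: nh.
apply/negP => hx; by move: (none x xin); rewrite (asg x w) // hx orbT.
Qed.

Lemma all2_mem (R : rel T) s t y : all2 R s t -> y \in t -> exists2 x, x \in s & R x y.
Proof.
elim: s t => [|a s IH] [|b t] //= /andP[ab hst]; rewrite inE => /orP[/eqP ->|yt].
  by exists a; rewrite ?mem_head.
by have [x xs hx] := IH t hst yt; exists x; rewrite // inE xs orbT.
Qed.

Lemma all2_size' (R : rel T) s t : all2 R s t -> size s = size t.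
Proof. by elim: s t => [|a s IH] [|b t] //= /andP[_ /IH ->]. Qed.

Lemma size_rem_le (x : T) s : size (rem x s) <= size s.
Proof. by elim: s => //= a s IH; case: ifP => //= _; rewrite ltnS. Qed.

Lemma escape delta : (forall x, delta <= deg e x) -> 3 <= delta ->
  forall cs r, cwin (dist2 e) cs r -> safe cs r -> size cs < 2 * delta -> False.
Proof.
move=> hdeg d3; fix IH 3.
move=> cs r w; case: w => {cs r} cs r cs' Hall Hor hs hsz.
have rn : r \notin cs'.
  apply/negP => /(all2_mem Hall) [x xcs] /orP [/eqP xr| hx];
    move/andP: hs => [rcs /allP hall].
    by subst x; rewrite xcs in rcs.
  by move: (hall x xcs); rewrite hx.
case: Hor => [rin|Hf]; first by rewrite rin in rn.
have szeq := all2_size' Hall.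
have hsz' : size cs' < 2 * delta by rewrite -szeq.
have [r' [hr' hs']] := key hdeg d3 rn hsz'.
apply: (IH _ _ (Hf r' _) hs'); first by rewrite /adj hr' orbT.
by apply: leq_ltn_trans (size_rem_le _ _) _; rewrite -szeq.
Qed.

End Main.

Lemma bigmin_le (I : eqType) (r : seq I) (P : pred I) (F : I -> nat) x0 j :
  j \in r -> P j -> \big[minn/x0]_(i <- r | P i) F i <= F j.
Proof.
elim: r => //= i r IH; rewrite inE big_cons => /orP[/eqP <-| jr] Pj.
  by rewrite Pj geq_minl.
by case: (P i); rewrite ?geq_min IH ?orbT.
Qed.

Theorem lemma5 (T : finType) (e : rel T) (delta : nat) :
  simple_graph e -> connected e -> girth_ge e 9 ->
  min_degree e delta -> 3 <= delta ->
  cc_ge (sq_minus e) (minn (2 * delta) (domination_number (sq_minus e))).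
Proof.
move=> [esym eirr] _ hg [hdeg _] d3 k [cs [szk hw]].
rewrite leqNgt; apply/negP; rewrite leq_min => /andP[k1 k2].
case: (pickP [pred r | safe e cs r]) => [r sr|none].
  by apply: (escape esym eirr hg hdeg d3 (hw r) sr); rewrite szk.
have domD : dominating (sq_minus e) [set x in cs].
  apply/forallP => x; move: (none x) => /= /negbT.
  rewrite /safe negb_and negbK => /orP[xin|/allPn [c cin hc]].
    by rewrite inE xin.
  by apply/orP; right; apply/existsP; exists c; rewrite inE cin; exact: negbNE.
have : domination_number (sq_minus e) <= #|[set x in cs]|.
  exact: bigmin_le (mem_index_enum _) domD.
rewrite cardsE => h.
have := leq_trans k2 (leq_trans h (card_size cs)).
by rewrite szk ltnn.
Qed.
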